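(* Let $M$ be a discrete maximal torus of the Weyl group $W=W(D_5)$. Then the discrete Weyl group $N_W(M)/M$ is isomorphic to the dihedral group of order $8$.
   Context: A discrete maximal torus of a finite Coxeter group $W$ is an Abelian subgroup of maximal order among Abelian subgroups of $W$ which, among such subgroups, has the largest number of cyclic factors of order $4$ in its decomposition into cyclic groups of prime-power order (for $W(D_5)$ this is a subgroup isomorphic to $\mathbb{Z}_4\times\mathbb{Z}_4$). The discrete Weyl group of $W$ is $W(M)=N_W(M)/M$, where $N_W(M)$ is the normalizer of $M$ in $W$. *)

(* Defs.v *)
From HB Require Import structures.
From mathcomp Require Import all_boot all_order all_fingroup all_solvable.
Set Implicit Arguments. Unset Strict Implicit. Unset Printing Implicit Defensive.
Open Scope group_scope.

(* W(D_5) realised in its reflection representation, acting faithfully on the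
   10 vectors +-e_1,...,+-e_5.  Index i < 5 encodes e_(i+1), index i+5 encodes
   -e_(i+1).  Simple reflections:
     s_i  (i = 1..4) : e_i <-> e_(i+1)   (and -e_i <-> -e_(i+1))
     s_5            : e_4 <-> -e_5, e_5 <-> -e_4   (reflection in e_4 + e_5) *)
Definition pt (i : nat) : 'I_10 := inord i.
Definition sD (i : nat) : {perm 'I_10} := tperm (pt i) (pt i.+1) * tperm (pt (i + 5)) (pt (i + 6)).
Definition sD5 : {perm 'I_10} := tperm (pt 3) (pt 9) * tperm (pt 4) (pt 8).
Definition WD5 : {group {perm 'I_10}} :=
  <<[set sD 0; sD 1; sD 2; sD 3; sD5]>>%G.

(* Number of cyclic factors of order 4 in the decomposition of an abelian group
   A into cyclic groups of prime-power order: these are the factors of order 4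
   in the decomposition of its (unique) Sylow 2-subgroup 'O_2(A). *)
Definition num_Z4 (gT : finGroupType) (A : {set gT}) : nat :=
  count (pred1 4) (abelian_type 'O_2(A)).

Definition discrete_maximal_torus (gT : finGroupType) (W M : {group gT}) : Prop :=
  [/\ M \subset W, abelian M,
      (forall A : {group gT}, A \subset W -> abelian A -> #|A| <= #|M|) &
      (forall A : {group gT}, A \subset W -> abelian A -> #|A| = #|M| ->
         num_Z4 A <= num_Z4 M)].

(* Main.v *)
Require Import Defs.
From mathcomp Require Import all_boot all_order all_fingroup all_solvable zmodp.
From mathcomp Require Import zify.
From Stdlib Require Import Lia.
Set Implicit Arguments. Unset Strict Implicit. Unset Printing Implicit Defensive.

Section Comp.
Local Open Scope nat_scope.
Definition idp : seq nat := iota 0 10.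
Definition pmul (p q : seq nat) : seq nat := map (fun i => nth 0 q i) p.
Definition ppow p n := iter n (fun r => pmul r p) idp.
Definition valid (p : seq nat) := [&& size p == 10, uniq p & all (fun i => i < 10) p].
Definition gensL : seq (seq nat) :=
 [:: [:: 1; 0; 2; 3; 4; 6; 5; 7; 8; 9]; [:: 0; 2; 1; 3; 4; 5; 7; 6; 8; 9];
     [:: 0; 1; 3; 2; 4; 5; 6; 8; 7; 9]; [:: 0; 1; 2; 4; 3; 5; 6; 7; 9; 8];
     [:: 0; 1; 2; 9; 8; 5; 6; 7; 4; 3]].
Definition evalw (w : seq nat) := foldl (fun r k => pmul r (nth idp gensL k)) idp w.
Fixpoint eqs (p q : seq nat) := match p, q with
 | [::], [::] => true | x :: p', y :: q' => eqn x y && eqs p' q' | _, _ => false end.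
Definition memq (p : seq nat) (L : seq (seq nat)) := has (eqs p) L.
Definition key (p : seq nat) := nth 0 p 0 * 10 + nth 0 p 1.

Fixpoint bfs (fuel : nat) (seen : seq (seq nat)) (front : seq (seq nat * seq nat)) (acc : seq (seq nat)) :=
  match fuel with 0 => acc | fuel'.+1 =>
  let step := fun (st : seq (seq nat) * seq (seq nat * seq nat)) (wp : seq nat * seq nat) =>
     foldl (fun st2 k => let q := pmul wp.2 (nth idp gensL k) in
        if memq q st2.1 then st2 else (q :: st2.1, (rcons wp.1 k, q) :: st2.2)) st (iota 0 5) in
  let '(seen', nf) := foldl step (seen, [::]) front in
  if nf is [::] then acc else bfs fuel' seen' nf (acc ++ map fst nf) end.

Definition WL := Eval vm_compute in bfs 30 [:: idp] [:: ([::], idp)] [:: [::]].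
Definition LW := Eval vm_compute in map evalw WL.
Definition buckets (L : seq (seq nat)) := [seq [seq q <- L | key q == k] | k <- iota 0 100].
Definition LWb := Eval vm_compute in buckets LW.
Lemma LWbE : LWb = buckets LW. Proof. by vm_compute. Qed.
Definition inW p := memq p (nth [::] LWb (key p)).
End Comp.


Lemma eqsE p q : eqs p q = (p == q).
Proof.
by elim: p q => [|x p IH] [|y q] //=; rewrite IH eqseq_cons.
Qed.

Lemma memqE p L : memq p L = (p \in L).
Proof.
elim: L => //= q L IH; rewrite in_cons IH eqsE.
by [].
Qed.

Definition lpf (p : seq nat) : {ffun 'I_10 -> 'I_10} := [ffun i : 'I_10 => inord (nth 0 p i)].
Definition lp (p : seq nat) : {perm 'I_10} := insubd (1 : {perm 'I_10}) (lpf p).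

Lemma valid_nth p i : valid p -> i < 10 -> nth 0 p i < 10.
Proof.
case/and3P=> /eqP sz _ /allP al lt; apply: al; apply: mem_nth; by rewrite sz.
Qed.

Lemma lpE p i : valid p -> lp p i = inord (nth 0 p i).
Proof.
move=> vp; have inj: injectiveb (lpf p).
  apply/injectiveP => x y; rewrite !ffunE => /(congr1 (@nat_of_ord 10)).
  rewrite !inordK ?valid_nth // => e.
  case/and3P: vp => /eqP sz up _.
  by apply/eqP; rewrite -val_eqE /= -(nth_uniq 0 _ _ up) ?sz // e.
by rewrite /lp -pvalE insubdK // ffunE.
Qed.

Lemma valid_mul p q : valid p -> valid q -> valid (pmul p q).
Proof.
move=> vp vq; have := vp; case/and3P=> /eqP szp up /allP alp.
have := vq; case/and3P=> /eqP szq uq /allP alq.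
apply/and3P; split.
- by rewrite size_map szp.
- rewrite map_inj_in_uniq // => x y /alp xl /alp yl /eqP.
  by rewrite nth_uniq ?szq // => /eqP.
- by apply/allP=> z /mapP[x /alp xl ->]; apply: valid_nth.
Qed.

Lemma lpM p q : valid p -> valid q -> lp (pmul p q) = lp p * lp q.
Proof.
move=> vp vq; apply/permP => i; rewrite permM !lpE ?valid_mul //.
case/and3P: (vp) => /eqP szp _ _.
by rewrite (nth_map 0) ?szp // inordK ?valid_nth.
Qed.

Lemma lp_inj p q : valid p -> valid q -> lp p = lp q -> p = q.
Proof.
move=> vp vq e; case/and3P: (vp) => /eqP szp _ _; case/and3P: (vq) => /eqP szq _ _.
apply: (@eq_from_nth _ 0); rewrite ?szp ?szq // => i lti.
have := congr1 (fun s : {perm 'I_10} => nat_of_ord (s (Ordinal lti))) e.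
by rewrite !lpE //= !inordK ?valid_nth.
Qed.

Lemma valid_idp : valid idp. Proof. by []. Qed.

Lemma lp1 : lp idp = 1.
Proof. apply/permP => i; rewrite lpE // perm1 nth_iota //=; exact: inord_val. Qed.

Lemma valid_pow p n : valid p -> valid (ppow p n).
Proof. move=> vp; elim: n => //= n IH; exact: valid_mul. Qed.

Lemma lpX p n : valid p -> lp (ppow p n) = lp p ^+ n.
Proof.
move=> vp; elim: n => [|n IH] /=; first by rewrite lp1.
by rewrite lpM ?valid_pow // IH expgSr.
Qed.

Definition lps (L : seq (seq nat)) : {set {perm 'I_10}} := [set x | x \in map lp L].

Lemma mem_lps L p : all valid L -> valid p -> (lp p \in lps L) = (p \in L).
Proof.
move=> /allP vL vp; rewrite inE; apply/mapP/idP => [[q qL e]|pL].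
  by rewrite (lp_inj vp (vL _ qL) e).
by exists p.
Qed.

Lemma lpsP L x : reflect (exists2 p, p \in L & x = lp p) (x \in lps L).
Proof. rewrite inE; exact: mapP. Qed.

Lemma card_lps L : all valid L -> uniq L -> #|lps L| = size L.
Proof.
move=> /allP vL uL; rewrite cardsE (card_uniqP _) ?size_map //.
by rewrite map_inj_in_uniq // => p q /vL vp /vL vq; apply: lp_inj.
Qed.

Lemma mem_lcoset_lps L p q : all valid L -> valid p -> valid q ->
  (lp q \in lp p *: lps L) = (q \in map (pmul p) L).
Proof.
move=> /allP vL vp vq; apply/lcosetP/mapP => [[y /lpsP[m mL ->]]|[m mL ->]].
  have vm := vL m mL; rewrite -lpM // => e; exists m => //.
  by apply: lp_inj e => //; apply: valid_mul.
by exists (lp m); [apply/lpsP; exists m | rewrite lpM ?(vL m mL)].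
Qed.

Lemma mem_rcoset_lps L p q : all valid L -> valid p -> valid q ->
  (lp q \in lps L :* lp p) = (q \in map (pmul^~ p) L).
Proof.
move=> /allP vL vp vq; apply/rcosetP/mapP => [[y /lpsP[m mL ->]]|[m mL ->]].
  have vm := vL m mL; rewrite -lpM // => e; exists m => //.
  by apply: lp_inj e => //; apply: valid_mul.
by exists (lp m); [apply/lpsP; exists m | rewrite lpM ?(vL m mL)].
Qed.


Lemma ord10_all (P : 'I_10 -> Prop) : (forall k (h : k < 10), P (Ordinal h)) -> forall i, P i.
Proof. by move=> H [k h]. Qed.
Lemma inordZ k : k < 10 -> (inord k : 'I_10) = inZp k.
Proof. by move=> h; apply/val_inj; rewrite /= inordK // modn_small. Qed.

Ltac permtac := apply/permP; apply: ord10_all; case=> [|[|[|[|[|[|[|[|[|[|k]]]]]]]]]] h //;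
 rewrite lpE // ?permM /sD /sD5 /pt !permE /= !inordZ //; by apply/val_inj.

Lemma gE0 : lp (nth idp gensL 0) = sD 0. Proof. permtac. Qed.
Lemma gE1 : lp (nth idp gensL 1) = sD 1. Proof. permtac. Qed.
Lemma gE2 : lp (nth idp gensL 2) = sD 2. Proof. permtac. Qed.
Lemma gE3 : lp (nth idp gensL 3) = sD 3. Proof. permtac. Qed.
Lemma gE4 : lp (nth idp gensL 4) = sD5. Proof. permtac. Qed.

Lemma valid_gen k : valid (nth idp gensL k).
Proof. by case: k => [|[|[|[|[|k]]]]] //=; rewrite nth_nil. Qed.

Lemma gen_inW k : lp (nth idp gensL k) \in WD5.
Proof.
case: k => [|[|[|[|[|k]]]]]; rewrite ?gE0 ?gE1 ?gE2 ?gE3 ?gE4;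
  try by apply: mem_gen; rewrite !inE eqxx ?orbT.
by rewrite /= nth_nil lp1 group1.
Qed.

Lemma gen_closed (gT : finGroupType) (S X : {set gT}) :
  1 \in X -> (forall x s, x \in X -> s \in S -> x * s \in X) -> <<S>> \subset X.
Proof.
move=> X1 XS; pose Y := [set g | [forall x in X, x * g \in X]].
have gY : group_set Y.
  apply/group_setP; split; first by rewrite inE; apply/forall_inP => x; rewrite mulg1.
  move=> g h; rewrite !inE => /forall_inP Hg /forall_inP Hh.
  by apply/forall_inP => x Xx; rewrite mulgA Hh ?Hg.
have sYX : Y \subset X by apply/subsetP => g; rewrite inE => /forall_inP/(_ 1 X1); rewrite mul1g.
apply: subset_trans sYX; rewrite (@gen_subG _ _ (Group gY)) /=.
apply/subsetP => s Ss; rewrite inE; apply/forall_inP => x Xx; exact: XS.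
Qed.

Lemma inWE p : valid p -> inW p = (p \in LW).
Proof.
move=> vp; rewrite /inW LWbE memqE /buckets.
have hk : key p < 100.
  rewrite /key; have h0 := valid_nth vp (isT : 0 < 10); have h1 := valid_nth vp (isT : 1 < 10).
  lia.
by rewrite (nth_map 0) ?size_iota // nth_iota // mem_filter eqxx.
Qed.

Lemma validLW : all valid LW. Proof. by vm_compute. Qed.
Lemma uniqLW : uniq LW. Proof. by vm_compute. Qed.
Lemma closedLW : all (fun p => all (fun k => inW (pmul p (nth idp gensL k))) (iota 0 5)) LW.
Proof. by vm_compute. Qed.
Lemma idLW : idp \in LW. Proof. by vm_compute. Qed.

Lemma evalw_in_gen w r : valid r -> lp r \in WD5 ->
  valid (foldl (fun r k => pmul r (nth idp gensL k)) r w) /\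
  lp (foldl (fun r k => pmul r (nth idp gensL k)) r w) \in WD5.
Proof.
elim: w r => // k w IH r vr Wr; apply: IH; first exact: valid_mul (valid_gen k).
by rewrite lpM ?valid_gen // groupM ?gen_inW.
Qed.

Lemma evalw_in w : valid (evalw w) /\ lp (evalw w) \in WD5.
Proof. by apply: evalw_in_gen; rewrite ?lp1 ?group1. Qed.

Lemma S_gen s : s \in [set sD 0; sD 1; sD 2; sD 3; sD5] -> exists k, s = lp (nth idp gensL k).
Proof.
rewrite !inE => /orP[/orP[/orP[/orP[]|]|]|] /eqP->.
- by exists 0; rewrite gE0.
- by exists 1%N; rewrite gE1.
- by exists 2%N; rewrite gE2.
- by exists 3%N; rewrite gE3.
- by exists 4%N; rewrite gE4.
Qed.

Lemma LWE : LW = map evalw WL. Proof. by vm_compute. Qed.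

Lemma WE : (WD5 : {set {perm 'I_10}}) = lps LW.
Proof.
apply/eqP; rewrite eqEsubset; apply/andP; split.
  apply: gen_closed; first by rewrite -lp1 mem_lps ?validLW ?idLW.
  move=> x s /lpsP[p pL ->] /S_gen[k ->].
  have vp := allP validLW p pL.
  rewrite -lpM ?valid_gen // mem_lps ?validLW ?valid_mul ?valid_gen // -inWE ?valid_mul ?valid_gen //.
  have [lt5|ge5] := ltnP k 5.
    by have := allP closedLW p pL => /allP; apply; rewrite mem_iota.
  rewrite nth_default // inWE ?valid_mul //.
  have -> : pmul p idp = p.
    case/and3P: vp => /eqP sz _ /allP al; rewrite /pmul.
    have e : {in p, (fun i => nth 0 idp i) =1 id} by move=> i /al li; rewrite nth_iota.
    by rewrite (iffLR (eq_in_map _ _ _) e) map_id.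
  by [].
apply/subsetP => x /lpsP[p pL ->]; move: pL; rewrite LWE => /mapP[w _ ->].
by case: (evalw_in w).
Qed.


Section NatPart.
Local Open Scope nat_scope.

Lemma four_sq k : 4 * k ^ 2 <= 4 ^ k.
Proof.
elim: k => // -[|k] IH //.
have -> : 4 ^ k.+2 = 4 * 4 ^ k.+1 by rewrite expnS.
move: IH; set X := 4 ^ k.+1; nia.
Qed.

Lemma even_sq n : ~~ odd n -> n ^ 2 <= 2 ^ n.
Proof.
move=> en; have := odd_double_half n; rewrite (negbTE en) add0n => <-.
set k := n./2; rewrite -mul2n expnM; have := four_sq k.
have -> : (2 * k) ^ 2 = 4 * k ^ 2 by rewrite expnMn.
by [].
Qed.

Lemma sq_le n : n ^ 2 <= 2 ^ (n + n).
Proof. by rewrite expnD -mulnn leq_mul // ltnW // ltn_expl. Qed.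

Section Key.
Variable T : finType.
Variable i : {perm T}.
Hypothesis hfp : forall z, i z != z.
Hypothesis hinv : forall z, i (i z) = z.

Lemma even_stable (O : {set T}) : (forall z, z \in O -> i z \in O) -> ~~ odd #|O|.
Proof.
move: {2}#|O| (leqnn #|O|) => n; elim: n O => [|n IH] O leOn st.
  by move: leOn; rewrite leqn0 => /eqP->.
case: (set_0Vmem O) => [->|[z zO]]; first by rewrite cards0.
set O' := O :\: [set z; i z].
have sub2 : [set z; i z] \subset O by rewrite subUset !sub1set zO st.
have cO : #|O| = #|O'| + 2.
  have := subset_leq_card sub2.
  rewrite cardsD (setIidPr sub2) cards2 eq_sym hfp /=.
  lia.
have st' : forall w, w \in O' -> i w \in O'.
  move=> w; rewrite !inE => /andP[/norP[/eqP wz /eqP wiz] wO].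
  rewrite st // andbT; apply/norP; split; apply/eqP => e.
    by apply: wiz; rewrite -e hinv.
  by apply: wz; rewrite -(hinv w) e hinv.
have := IH O' _ st'; rewrite cO oddD /= addbF => -> //.
by move: leOn; rewrite cO; lia.
Qed.

Lemma key_bound n (B : {group {perm T}}) (X : {set T}) : #|X| <= n -> abelian B ->
  B \subset ('C[i])%g -> (forall b z, b \in B -> z \notin X -> b z = z) ->
  (forall z, z \in X -> i z \in X) -> #|B| ^ 2 <= 2 ^ #|X|.
Proof.
elim: n B X => [|n IH] B X leXn cB sBC fixB stX.
all: have [B1|ntB] := eqVneq (B : {set _}) 1%g;
  first by rewrite B1 cards1 exp1n expn_gt0.
all: have [b Bb nb1] := trivgPn _ ntB.
all: have : ~~ [forall y, b y == y].
all: try (apply: contra nb1 => /forallP H; apply/eqP/permP => y; rewrite perm1; exact/eqP/H).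
all: rewrite negb_forall => /existsP[y /eqP by_y].
all: have yX : y \in X by apply: contraT => /(fixB b y Bb).
  by move: leXn; rewrite leqn0 => /eqP/cards0_eq X0; rewrite X0 inE in yX.
have Bcomm : forall b c, b \in B -> c \in B -> (b * c = c * b)%g.
  by move=> c d Bc Bd; apply: (centsP cB).
have Ci : forall b z, b \in B -> i (b z) = b (i z).
  move=> c z Bc; have := subsetP sBC c Bc; rewrite cent1E => /eqP e.
  by rewrite -!permM e.
set O := orbit 'P B y; set S := ('C_B[y | 'P])%g.
have oS : #|O| * #|S| = #|B| := card_orbit_stab 'P B y.
have Oy : y \in O := orbit_refl _ _ _.
have OP : forall z, reflect (exists2 c, c \in B & c y = z) (z \in O).
  by move=> z; apply: (iffP orbitP) => -[c Bc e]; exists c.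
have SP : forall s, s \in S -> s \in B /\ s y = y.
  by move=> s; rewrite inE => /andP[Bs /astab1P].
have sSB : S \subset B by apply: subsetIl.
have SfixO : forall s z, s \in S -> z \in O -> s z = z.
  move=> s z /SP[Bs sy] /OP[c Bc <-].
  by rewrite -permM Bcomm // permM sy.
have SfixiO : forall s z, s \in S -> z \in i @: O -> s z = z.
  move=> s z Ss /imsetP[w wO ->]; have [Bs _] := SP s Ss.
  by rewrite -(Ci s w Bs) (SfixO s w Ss wO).
set U := O :|: i @: O.
have OX : O \subset X.
  apply/subsetP => z /OP[c Bc <-]; apply: contraT => ncX.
  by have := fixB c (c y) Bc ncX => /perm_inj e; rewrite e in ncX; rewrite yX in ncX.
have UX : U \subset X.
  by rewrite subUset OX; apply/subsetP => z /imsetP[w wO ->]; apply: stX; apply: (subsetP OX).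
set X' := X :\: U.
have fixS : forall s z, s \in S -> z \notin X' -> s z = z.
  move=> s z Ss; rewrite inE negb_and negbK => /orP[zU|nzX].
    by case/setUP: zU => [/(SfixO s z Ss)|/(SfixiO s z Ss)].
  by apply: fixB nzX; apply: (subsetP sSB).
have iU : forall z, z \in U -> i z \in U.
  move=> z /setUP[zO|/imsetP[w wO ->]]; first by rewrite inE imset_f ?orbT.
  by rewrite hinv inE wO.
have stX' : forall z, z \in X' -> i z \in X'.
  move=> z; rewrite !in_setD => /andP[nzU zX]; rewrite stX // andbT.
  by apply: contra nzU => izU; have := iU _ izU; rewrite hinv.
have cX : #|X| = #|X'| + #|U|.
  rewrite cardsD (setIidPr UX); have := subset_leq_card UX; lia.
have ltX : #|X'| < #|X|.
  rewrite cX -addn1 leq_add2l card_gt0; apply/set0Pn; exists y; by rewrite inE Oy.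
have leX'n : #|X'| <= n by move: leXn ltX; lia.
have IHS := IH S X' leX'n (abelianS sSB cB) (subset_trans sSB sBC) fixS stX'.
have bO : #|O| ^ 2 <= 2 ^ #|U|.
  case: (set_0Vmem (O :&: i @: O)) => [dis|[w /setIP[wO /imsetP[v vO wv]]]].
    have ciO : #|i @: O| = #|O| by apply: card_imset; exact: perm_inj.
    by rewrite /U cardsU dis cards0 subn0 ciO sq_le.
  have iyO : i y \in O.
    move: wO vO => /OP[c Bc cw] /OP[d Bd dv].
    apply/OP; exists (c * d^-1)%g; first by rewrite groupM ?groupV.
    by rewrite permM cw wv -dv Ci // -permM mulgV perm1.
  have iOO : forall z, z \in O -> i z \in O.
    move=> z /OP[c Bc <-]; move/OP: iyO => [d Bd dy].
    by apply/OP; exists (d * c)%g; rewrite ?groupM // permM dy Ci.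
  have -> : U = O.
    by apply/setUidPl/subsetP => z /imsetP[u uO ->]; apply: iOO.
  exact: even_sq (even_stable iOO).
by rewrite -oS expnMn cX expnD mulnC leq_mul.
Qed.

End Key.

End NatPart.


Definition iotaL : seq nat := [:: 5; 6; 7; 8; 9; 0; 1; 2; 3; 4]%N.
Definition io : {perm 'I_10} := lp iotaL.

Lemma io_fp z : io z != z.
Proof.
move: z; apply: ord10_all; case=> [|[|[|[|[|[|[|[|[|[|k]]]]]]]]]] h //;
 by rewrite /io lpE // !inordZ.
Qed.

Lemma io_inv z : io (io z) = z.
Proof.
move: z; apply: ord10_all; case=> [|[|[|[|[|[|[|[|[|[|k]]]]]]]]]] h //;
 rewrite /io !lpE // !inordZ //; by apply/val_inj.
Qed.

Lemma W_cent_io : WD5 \subset 'C[io].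
Proof.
have H : all (fun p => pmul p iotaL == pmul iotaL p) LW by vm_compute.
apply/subsetP => x; rewrite WE => /lpsP[p pL ->].
have vp := allP validLW p pL.
by rewrite cent1E /io -!lpM // (eqP (allP H p pL)).
Qed.

Lemma io_notW : io \notin WD5.
Proof. by rewrite WE /io mem_lps ?validLW // -inWE //; vm_compute. Qed.

Lemma io_order : #[io] = 2.
Proof.
have h2 : io ^+ 2 = 1 by rewrite /io -lpX // -lp1; congr lp; vm_compute.
have h1 : io != 1 by apply/eqP => e; have := io_fp (inord 0); rewrite e perm1 eqxx.
have d2 : #[io] %| 2 by rewrite order_dvdn h2.
have n1 : #[io] != 1%N by rewrite order_eq1.
have le2 := dvdn_leq (isT : 0 < 2) d2.
move: (#[io]) d2 n1 le2; do 3?case=> //.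
Qed.

Lemma abelian_bound (A : {group {perm 'I_10}}) : A \subset WD5 -> abelian A -> #|A| <= 16.
Proof.
move=> sAW cA.
have sAC : A \subset 'C[io] := subset_trans sAW W_cent_io.
have cIA : <[io]> \subset 'C(A) by rewrite cycle_subG -sub_cent1.
have ioA : io \notin A by apply: contra io_notW; apply: (subsetP sAW).
have TI : A :&: <[io]> = 1.
  by rewrite setIC prime_TIg // ?cycle_subG // -orderE io_order.
pose B := (A <*> <[io]>)%G.
have cardB : #|B| = (#|A| * 2)%N.
  by rewrite /B /= cent_joinEr // TI_cardMg // -orderE io_order.
have cB : abelian B by rewrite abelianY cA cycle_abelian /=.
have sBC : B \subset 'C[io].
  by rewrite join_subG sAC cycle_subG cent1id.
have := @key_bound _ io io_fp io_inv 10 B [set: 'I_10].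
rewrite cardsT card_ord => /(_ (leqnn 10) cB sBC).
have fixB : forall b z, b \in B -> z \notin [set: 'I_10] -> b z = z by move=> b z _; rewrite inE.
move=> /(_ fixB) /(_ (fun z _ => in_setT _)); rewrite cardB.
move=> h; nia.
Qed.


Lemma order4 (gT : finGroupType) (x : gT) : x ^+ 4 = 1 -> x ^+ 2 != 1 -> #[x] = 4%N.
Proof.
move=> h4 h2; have d4 : (#[x] %| 4)%N by rewrite order_dvdn h4.
have n2 : ~~ (#[x] %| 2)%N by rewrite order_dvdn.
have le4 := dvdn_leq (isT : (0 < 4)%N) d4.
by move: (#[x]) d4 n2 le4; do 5?case=> //.
Qed.

Lemma D8_crit (gT : finGroupType) (N K : {group gT}) (x y : gT) :
  N \subset 'N(K) -> K \subset N -> #|N| = (8 * #|K|)%N -> x \in N -> y \in N ->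
  x ^+ 4 \in K -> x ^+ 2 \notin K -> y ^+ 2 \in K -> x ^ y * x \in K ->
  (forall i, (i < 4)%N -> y \notin K :* x ^+ i) -> N / K \isog 'D_8.
Proof.
move=> sNK sKN cN Nx Ny x4 x2 y2 xyx ny.
have nKx : x \in 'N(K) := subsetP sNK x Nx.
have nKy : y \in 'N(K) := subsetP sNK y Ny.
set X := coset K x; set Y := coset K y.
have cardQ : #|N / K| = 8%N.
  rewrite card_quotient //; have := Lagrange sKN; rewrite cN => e.
  by apply/eqP; rewrite -(eqn_pmul2l (cardG_gt0 K)) e mulnC.
have QX : X \in N / K by apply: mem_quotient.
have QY : Y \in N / K by apply: mem_quotient.
have X4 : X ^+ 4 = 1 by rewrite /X -morphX //; exact: coset_id.
have X2 : X ^+ 2 != 1.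
  apply/eqP => e; have := coset_idr (groupX 2 nKx); rewrite morphX // -/X e => /(_ erefl).
  by apply/negP.
have Y2 : Y ^+ 2 = 1 by rewrite /Y -morphX //; exact: coset_id.
have XY : X ^ Y = X^-1.
  rewrite /X /Y -morphJ // -morphV //; apply/rcoset_kercosetP; rewrite ?groupJ ?groupV //.
  by rewrite mem_rcoset invgK.
have oX : #[X] = 4%N by apply: order4.
have YnX : Y \notin <[X]>.
  apply/negP => /cycleP[j e].
  have := ny (j %% 4)%N (ltn_pmod _ (isT : (0 < 4)%N)).
  move/negP; apply; apply/rcoset_kercosetP; rewrite ?groupX //.
  by rewrite morphX // -/X -oX expg_mod_order -e.
apply/(isoGrpP _ (Grp_dihedral (isT : (1 < 4)%N))); split.
  by rewrite cardQ card_dihedral.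
apply/existsP; exists (X, Y); rewrite /= !xpair_eqE /= X4 Y2 XY !eqxx !andbT.
set J := <[X]> <*> <[Y]>.
have sJQ : J \subset N / K by rewrite join_subG !cycle_subG QX QY.
have sXJ : <[X]> \subset J := joing_subl _ _.
have YJ : Y \in J by rewrite -cycle_subG joing_subr.
have pXJ : <[X]> \proper J by apply/properP; split => //; exists Y.
have lt4 : (4 < #|J|)%N by rewrite -oX orderE proper_card.
have [k ek] : exists k, #|J| = (k * 4)%N by apply/dvdnP; rewrite -oX orderE cardSg.
rewrite eqEcard sJQ cardQ /= ek; move: lt4; rewrite ek.
by case: k {ek} => [|[|k]].
Qed.


Definition a0L : seq nat := [:: 0; 1; 8; 2; 9; 5; 6; 3; 7; 4]%N.
Definition b0L : seq nat := [:: 6; 0; 2; 3; 9; 1; 5; 7; 8; 4]%N.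
Definition xDL : seq nat := [:: 3; 2; 0; 1; 4; 8; 7; 5; 6; 9]%N.
Definition yDL : seq nat := [:: 1; 0; 2; 3; 4; 6; 5; 7; 8; 9]%N.
Definition M0L := Eval vm_compute in
  [seq pmul (ppow a0L i) (ppow b0L j) | i <- iota 0 4, j <- iota 0 4].
Lemma M0LE : M0L = [seq pmul (ppow a0L i) (ppow b0L j) | i <- iota 0 4, j <- iota 0 4].
Proof. by vm_compute. Qed.
Definition inNb g := memq (pmul a0L g) (map (pmul g) M0L) && memq (pmul b0L g) (map (pmul g) M0L).
Definition NL := Eval vm_compute in filter inNb LW.
Lemma NLE : NL = filter inNb LW. Proof. by vm_compute. Qed.

Definition a0 := lp a0L.
Definition b0 := lp b0L.
Definition M0 := <<[set a0; b0]>>%G.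

Lemma validM0L : all valid M0L. Proof. by vm_compute. Qed.
Lemma uniqM0L : uniq M0L. Proof. by vm_compute. Qed.

Lemma M0E : (M0 : {set {perm 'I_10}}) = lps M0L.
Proof.
apply/eqP; rewrite eqEsubset; apply/andP; split.
  apply: gen_closed; first by rewrite -lp1 mem_lps ?validM0L //; vm_compute.
  have H : all (fun p => memq (pmul p a0L) M0L && memq (pmul p b0L) M0L) M0L by vm_compute.
  move=> x s /lpsP[p pL ->]; have vp := allP validM0L p pL.
  have := allP H p pL; rewrite !memqE => /andP[h1 h2].
  by case/set2P => ->; rewrite -lpM // mem_lps ?validM0L ?valid_mul.
apply/subsetP => x /lpsP[p]; rewrite M0LE => /allpairsP[[i j] [_ _ ->]] ->.
by rewrite lpM ?valid_pow // !lpX // groupM ?groupX // mem_gen // !inE eqxx ?orbT.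
Qed.

Lemma cardM0 : #|M0| = 16%N.
Proof. by rewrite M0E card_lps ?validM0L ?uniqM0L. Qed.

Lemma a0W : a0 \in WD5. Proof. by rewrite WE mem_lps ?validLW // -inWE //; vm_compute. Qed.
Lemma b0W : b0 \in WD5. Proof. by rewrite WE mem_lps ?validLW // -inWE //; vm_compute. Qed.
Lemma M0W : M0 \subset WD5.
Proof. by rewrite gen_subG subUset !sub1set a0W b0W. Qed.

Lemma ab0 : commute a0 b0.
Proof. by rewrite /commute /a0 /b0 -!lpM //; congr lp; vm_compute. Qed.

Lemma abelM0 : abelian M0.
Proof.
rewrite abelian_gen; apply/centsP => x /set2P[]-> y /set2P[]->; 
  by [apply: commute_refl | apply: ab0 | apply/commute_sym/ab0].
Qed.


Lemma lpX1 p n : valid p -> (lp p ^+ n == 1) = (ppow p n == idp).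
Proof.
move=> vp; rewrite -lpX // -lp1; apply/eqP/eqP => [|->] //.
by move/lp_inj; apply; rewrite ?valid_pow.
Qed.

Lemma ord4_lp p : valid p -> ppow p 4 == idp -> ppow p 2 != idp -> #[lp p] = 4%N.
Proof. by move=> vp h4 h2; apply: order4; [apply/eqP|]; rewrite lpX1. Qed.
Lemma oa0 : #[a0] = 4%N. Proof. by apply: ord4_lp; vm_compute. Qed.
Lemma ob0 : #[b0] = 4%N. Proof. by apply: ord4_lp; vm_compute. Qed.

Lemma TIab : <[a0]> :&: <[b0]> = 1.
Proof.
apply/trivgP/subsetP => z /setIP[/cycleP[i ->] /cycleP[j e]].
rewrite -(expg_mod_order a0 i) oa0 in e *; rewrite -(expg_mod_order b0 j) ob0 in e.
have H : all (fun i => all (fun j => (ppow a0L i == ppow b0L j) ==> (i == 0%N)) (iota 0 4)) (iota 0 4).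
  by vm_compute.
have e' : ppow a0L (i %% 4) = ppow b0L (j %% 4).
  by apply: lp_inj; rewrite ?valid_pow // !lpX.
have hi : (i %% 4 \in iota 0 4)%N by rewrite mem_iota ltn_pmod.
have hj : (j %% 4 \in iota 0 4)%N by rewrite mem_iota ltn_pmod.
have := allP (allP H _ hi) _ hj; rewrite e' eqxx /= => /eqP ->.
by rewrite inE.
Qed.

Lemma numZ4M0 : num_Z4 M0 = 2%N.
Proof.
have pM0 : 2.-group M0 by rewrite /pgroup cardM0.
rewrite /num_Z4 pcore_pgroup_id //.
have hb : \big[dprod/1]_(x <- [:: a0; b0]) <[x]> = M0.
  rewrite big_cons big_cons big_nil dprodg1 dprodE ?TIab //; last first.
    by rewrite cycle_subG /= cent_cycle cent1C; apply/cent1P; apply: ab0.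
  apply/eqP; rewrite /= eqEcard mulG_subG !cycle_subG !mem_gen ?inE ?eqxx ?orbT //=.
  by rewrite TI_cardMg ?TIab // -!orderE oa0 ob0 cardM0.
have n1 : 1 \notin [:: a0; b0].
  apply/negP; rewrite !inE => /orP[] /eqP e; [have := oa0 | have := ob0];
  by rewrite -e order1.
have := abelian_type_pgroup pM0 hb n1; rewrite /= oa0 ob0 => /seq.permP ->.
by [].
Qed.


Lemma conjM0 p g : valid p -> valid g ->
  (lp p ^ lp g \in M0) = (pmul p g \in map (pmul g) M0L).
Proof.
move=> vp vg; rewrite -mem_lcoset_lps ?validM0L ?valid_mul // -M0E mem_lcoset.
by rewrite lpM // conjgE mulgA.
Qed.

Lemma N0E : ('N_WD5(M0) : {set {perm 'I_10}}) = lps NL.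
Proof.
have vNL : all valid NL by rewrite NLE; apply/allP => p; rewrite mem_filter => /andP[_ /(allP validLW)].
apply/setP => x; apply/idP/idP.
  case/setIP; rewrite WE => /lpsP[g gL ->]; have vg := allP validLW g gL.
  rewrite inE /M0 -genJ gen_subG sub_conjg subUset !sub1set !mem_conjg invgK.
  rewrite conjM0 // conjM0 // => /andP[h1 h2].
  by rewrite mem_lps // NLE mem_filter gL /inNb !memqE h1 h2.
case/lpsP => g; rewrite NLE mem_filter => /andP[hN gL] ->; have vg := allP validLW g gL.
rewrite inE WE mem_lps ?validLW // gL inE /M0 -genJ gen_subG sub_conjg subUset !sub1set !mem_conjg invgK.
by rewrite conjM0 // conjM0 // -!memqE.
Qed.

Lemma cardN0 : #|'N_WD5(M0)| = 128%N.
Proof.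
rewrite N0E card_lps; first by vm_compute.
  by rewrite NLE; apply/allP => p; rewrite mem_filter => /andP[_ /(allP validLW)].
by rewrite NLE filter_uniq ?uniqLW.
Qed.


Definition ord4b p := eqs (ppow p 4) idp && ~~ eqs (ppow p 2) idp.
Definition O4 := Eval vm_compute in filter ord4b LW.
Lemma O4E : O4 = filter ord4b LW. Proof. vm_compute. reflexivity. Qed.
Definition RL : seq (seq nat) := [:: [:: 0; 1; 2; 3; 4; 5; 6; 7; 8; 9]; [:: 0; 2; 1; 3; 4; 5; 7; 6; 8; 9]; [:: 0; 1; 2; 4; 3; 5; 6; 7; 9; 8]; [:: 2; 0; 1; 3; 4; 7; 5; 6; 8; 9]; [:: 0; 2; 1; 4; 3; 5; 7; 6; 9; 8]; [:: 0; 1; 4; 2; 3; 5; 6; 9; 7; 8]; [:: 2; 0; 1; 4; 3; 7; 5; 6; 9; 8]; [:: 0; 4; 1; 2; 3; 5; 9; 6; 7; 8]; [:: 0; 2; 4; 1; 3; 5; 7; 9; 6; 8]; [:: 4; 0; 1; 2; 3; 9; 5; 6; 7; 8]; [:: 2; 0; 4; 1; 3; 7; 5; 9; 6; 8]; [:: 0; 4; 2; 1; 3; 5; 9; 7; 6; 8]; [:: 4; 0; 2; 1; 3; 9; 5; 7; 6; 8]; [:: 2; 4; 0; 1; 3; 7; 9; 5; 6; 8]; [:: 4; 2; 0; 1; 3; 9; 7; 5; 6; 8]]%N.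
Lemma RLW : all inW RL. Proof. vm_compute. reflexivity. Qed.
Definition inNc pa pb g := memq (pmul pa g) (map (pmul g) M0L) && memq (pmul pb g) (map (pmul g) M0L).
Lemma pairsOK : all (fun pa => all (fun pb =>
   if eqs (pmul pa pb) (pmul pb pa) && ~~ eqs (ppow pa 2) (ppow pb 2) then has (inNc pa pb) RL else true) O4) O4.
Proof. vm_compute. reflexivity. Qed.

Lemma validRL : all valid RL. Proof. by vm_compute. Qed.

Lemma inO4 p : p \in LW -> #[lp p] = 4%N -> p \in O4.
Proof.
move=> pL op; have vp := allP validLW p pL.
rewrite O4E mem_filter pL andbT /ord4b !eqsE -!lpX1 //.
have h4 : lp p ^+ 4 = 1 by have := expg_order (lp p); rewrite op.
rewrite h4 eqxx /=; apply/negP => /eqP h.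
by have := order_dvdn (lp p) 2; rewrite h eqxx op.
Qed.

Lemma conj_exists x y : x \in WD5 -> y \in WD5 -> #[x] = 4%N -> #[y] = 4%N ->
  commute x y -> x ^+ 2 != y ^+ 2 -> exists2 g, g \in WD5 & (x ^ g \in M0) && (y ^ g \in M0).
Proof.
rewrite WE => /lpsP[pa paL ->] /lpsP[pb pbL ->] ox oy cxy nxy.
have va := allP validLW pa paL; have vb := allP validLW pb pbL.
have := allP (allP pairsOK pa (inO4 paL ox)) pb (inO4 pbL oy).
have -> : eqs (pmul pa pb) (pmul pb pa).
  by rewrite eqsE; apply/eqP; apply: lp_inj; rewrite ?valid_mul // !lpM.
have -> : ~~ eqs (ppow pa 2) (ppow pb 2).
  by rewrite eqsE; apply: contra nxy => /eqP e; rewrite -!lpX // e.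
move=> /hasP[g gR /andP[h1 h2]].
have vg := allP validRL g gR.
exists (lp g).
  have : lp g \in lps LW by rewrite mem_lps ?validLW // -inWE // (allP RLW).
  by rewrite -WE.
by rewrite !conjM0 // -!memqE h1 h2.
Qed.


Lemma prod_split (s : seq nat) :
  (\prod_(m <- s) m = 4 ^ count (pred1 4) s * \prod_(m <- s | m != 4) m)%N.
Proof.
elim: s => [|a s IH]; first by rewrite !big_nil.
rewrite !big_cons IH /=; case: (eqVneq a 4) => [->|na] /=.
  by rewrite add1n expnS mulnA.
by rewrite add0n mulnCA.
Qed.

Lemma prod_rest (s : seq nat) : all (fun m => 1 < m)%N s ->
  (\prod_(m <- s | m != 4) m = 1)%N -> all (pred1 4%N) s.
Proof.
elim: s => [|a s IH] //= /andP[a1 al]; rewrite big_cons.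
case: (eqVneq a 4) => [-> | na] /=; first by move/(IH al).
by move/eqP; rewrite muln_eq1 => /andP[/eqP a_1]; rewrite a_1 in a1.
Qed.

Lemma seq44 (s : seq nat) : all (fun m => 1 < m)%N s -> (\prod_(m <- s) m = 16)%N ->
  (2 <= count (pred1 4) s)%N -> size s = 2%N /\ all (pred1 4%N) s.
Proof.
move=> al hp hc; rewrite prod_split in hp.
move: hp hc; set c := count _ _; set P := (\prod_(m <- s | _) m)%N => hp hc.
have [k ck] : exists k, c = (k + 2)%N by exists (c - 2)%N; rewrite subnK.
rewrite ck expnD mulnAC (_ : 4 ^ 2 = 16)%N // in hp.
have : (4 ^ k * P == 1)%N.
  by rewrite -(eqn_pmul2r (isT : (0 < 16)%N)) mul1n hp.
rewrite muln_eq1 => /andP[/eqP k1 /eqP P1].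
have k0 : k = 0%N by apply/eqP; rewrite -(eqn_exp2l _ _ (isT : (1 < 4)%N)) k1.
have a4 := prod_rest al P1; split => //.
by move: (a4); rewrite all_count => /eqP <-; rewrite -/c ck k0.
Qed.

Definition x0 := lp xDL.
Definition y0 := lp yDL.

Lemma memM0 p : valid p -> (lp p \in M0) = memq p M0L.
Proof. by move=> vp; rewrite M0E mem_lps ?validM0L // memqE. Qed.

Lemma validNL : all valid NL. Proof. by vm_compute. Qed.
Lemma x0N : x0 \in 'N_WD5(M0).
Proof. by rewrite N0E mem_lps ?validNL //; vm_compute. Qed.
Lemma y0N : y0 \in 'N_WD5(M0).
Proof. by rewrite N0E mem_lps ?validNL //; vm_compute. Qed.
Lemma x04 : x0 ^+ 4 \in M0. Proof. by rewrite /x0 -lpX // memM0 ?valid_pow //; vm_compute. Qed.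
Lemma x02 : x0 ^+ 2 \notin M0. Proof. by rewrite /x0 -lpX // memM0 ?valid_pow //; vm_compute. Qed.
Lemma y02 : y0 ^+ 2 \in M0. Proof. by rewrite /y0 -lpX // memM0 ?valid_pow //; vm_compute. Qed.
Lemma xyx0 : x0 ^ y0 * x0 \in M0.
Proof.
have -> : (x0 ^ y0 * x0 \in M0) = (x0 * y0 * x0 \in y0 *: M0).
  by rewrite mem_lcoset conjgE !mulgA.
by rewrite /x0 /y0 -!lpM ?valid_mul // M0E mem_lcoset_lps ?validM0L ?valid_mul //.
Qed.
Lemma ny0 i : (i < 4)%N -> y0 \notin M0 :* x0 ^+ i.
Proof.
move=> lti; rewrite /x0 /y0 -lpX // M0E mem_rcoset_lps ?validM0L ?valid_pow //.
by move: i lti; do 4?case=> //; vm_compute.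
Qed.

Theorem theorem4p2 (M : {group {perm 'I_10}}) :
  discrete_maximal_torus WD5 M -> 'N_WD5(M) / M \isog 'D_8.
Proof.
case=> sMW cM maxM z4M.
have c16 : #|M| = 16%N.
  by apply/eqP; rewrite eqn_leq abelian_bound //= -cardM0 maxM ?M0W ?abelM0.
have z4 : (2 <= num_Z4 M)%N.
  by have := z4M _ M0W abelM0; rewrite numZ4M0; apply; rewrite cardM0 c16.
have pM : 2.-group M by rewrite /pgroup c16.
move: z4; rewrite /num_Z4 pcore_pgroup_id //.
have [b hb ht] := abelian_structure cM.
rewrite -ht => z4.
have hp : (\prod_(m <- map order b) m = 16)%N.
  rewrite big_map -c16 -(bigdprod_card hb); apply: eq_bigr => z _; exact: orderE.
have hgt : all (fun m => 1 < m)%N (map order b) by rewrite ht; exact: abelian_type_gt1.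
have [sz al] := seq44 hgt hp z4.
clear ht hp hgt z4; move: hb sz al; case: b => [|x [|y [|? ?]]] //= hb _.
rewrite andbT => /andP[/eqP ox /eqP oy].
rewrite big_cons big_cons big_nil dprodg1 in hb.
case/dprodP: hb => _ defM cxy tixy.
have xM : x \in M by rewrite -defM (subsetP (mulG_subl _ _)) ?cycle_id.
have yM : y \in M by rewrite -defM (subsetP (mulG_subr _ _)) ?cycle_id.
have cmxy : commute x y.
  have := subsetP cxy y (cycle_id y); rewrite cent_cycle => /cent1P; exact: commute_sym.
have nxy : x ^+ 2 != y ^+ 2.
  apply/eqP => e; have : x ^+ 2 \in <[x]> :&: <[y]>.
    by apply/setIP; split; [exact: mem_cycle | rewrite e; exact: mem_cycle].
  rewrite tixy inE => /eqP h.
  by have := order_dvdn x 2; rewrite h eqxx ox.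
have [g gW /andP[xg yg]] := conj_exists (subsetP sMW x xM) (subsetP sMW y yM) ox oy cmxy nxy.
have MgE : M :^ g = M0.
  apply/eqP; rewrite eqEcard cardJg c16 cardM0 leqnn andbT.
  by rewrite -defM conjsMg -!cycleJ mulG_subG !cycle_subG xg yg.
have NgE : 'N_WD5(M) :^ g = 'N_WD5(M0) by rewrite conjIg conjGid // -normJ MgE.
set X := x0 ^ g^-1; set Y := y0 ^ g^-1.
have hx : x0 = X ^ g by rewrite /X conjgKV.
have hy : y0 = Y ^ g by rewrite /Y conjgKV.
apply: (@D8_crit _ _ _ X Y).
- exact: subsetIr.
- by rewrite subsetI sMW normG.
- by rewrite -(cardJg _ g) NgE cardN0 c16.
- by rewrite -(memJ_conjg _ g) NgE -hx x0N.
- by rewrite -(memJ_conjg _ g) NgE -hy y0N.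
- by rewrite -(memJ_conjg _ g) conjXg -hx MgE x04.
- by rewrite -(memJ_conjg _ g) conjXg -hx MgE x02.
- by rewrite -(memJ_conjg _ g) conjXg -hy MgE y02.
- by rewrite -(memJ_conjg _ g) conjMg conjJg -hx -hy MgE xyx0.
move=> i lti; rewrite mem_rcoset -(memJ_conjg _ g) conjMg conjVg conjXg -hx -hy MgE -mem_rcoset.
exact: ny0.
Qed.
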